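(* Consider an elimination path of length $\ell$ accessed by some set of processes, against any adversary. Then at most one process wins, and in any execution in which at least one process accesses the path and all accessing processes complete, not all of them lose. Moreover, if $k\le\ell$ processes access the elimination path, then no process visits a node with index $j>k$, and no process falls off the path.
   Context: Deterministic splitter: an object with a one-time operation $\mathrm{split}()$ returning $\mathrm{stop}$, $\mathrm{left}$ or $\mathrm{right}$, such that if $m\ge1$ processes call it, at most one stops, at most $m-1$ turn left and at most $m-1$ turn right (so a lone caller stops); moreover a process that stops or turns right invoked $\mathrm{split}()$ before any other $\mathrm{split}()$ call on the same object responded. A 2-process TAS object supports $\mathrm{TAS}(i)$, $i\in\{1,2\}$, called by at most two processes with distinct $i$; it returns $0$ (win) to at most one caller, and to exactly one if both complete (and to a lone caller). Elimination path of length $\ell$: nodes $1,\dots,\ell$, node $i$ holding a deterministic splitter $S_i$ and a 2-process TAS object $T_i$. A process enters at node $1$. At node $i$ it calls $S_i.\mathrm{split}()$: if it turns left it loses and stops; if it turns right it moves to node $i+1$ if $i<\ell$, and falls off the path (taking no more steps in the path) if $i=\ell$; if it stops at $S_i$, it calls $T_i.\mathrm{TAS}(1)$ and then moves back toward node $1$: whenever it has won $T_j$ with $j>1$ it calls $T_{j-1}.\mathrm{TAS}(2)$; if it loses any of these TAS calls it loses. A process wins the elimination path if it wins $T_1$. *)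

(* Defs.v *)
(* An asynchronous shared-memory execution of the
   elimination path, modelled at the level of operation invocations and
   responses on the shared objects (splitters S_i, 2-process TAS objects T_i). *)
From mathcomp Require Import all_boot.
Set Implicit Arguments. Unset Strict Implicit. Unset Printing Implicit Defensive.

Inductive call := CSplit of nat | CTAS of nat & nat.
Inductive resp := RStop | RLeft | RRight | RWin | RLose.
Record op := Op { ocall : call; oinv : nat; ores : option (resp * nat) }.

Inductive outcome := Win | Lose | FallOff.
Inductive pstate := AtSplit of nat | AtTAS of nat & nat | Done of outcome.

Definition expected_call_ok (s : pstate) (c : call) : bool :=
  match s, c with
  | AtSplit i, CSplit i' => i == i'
  | AtTAS j a, CTAS j' a' => (j == j') && (a == a')
  | _, _ => false
  end.

Definition step (ell : nat) (s : pstate) (r : resp) : option pstate :=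
  match s, r with
  | AtSplit _, RLeft => Some (Done Lose)
  | AtSplit i, RRight => Some (if i < ell then AtSplit i.+1 else Done FallOff)
  | AtSplit i, RStop => Some (AtTAS i 1)
  | AtTAS j _, RWin => Some (if 1 < j then AtTAS j.-1 2 else Done Win)
  | AtTAS _ _, RLose => Some (Done Lose)
  | _, _ => None
  end.

(* Only the last operation may
   be pending (the state is then the one in which it was invoked). *)
Fixpoint exec (ell : nat) (s : pstate) (ops : seq op) : option pstate :=
  match ops with
  | [::] => Some s
  | o :: rest =>
      if expected_call_ok s (ocall o) then
        match ores o with
        | None => if rest is [::] then Some s else None
        | Some (r, _) =>
            match step ell s r with
            | Some s' => exec ell s' rest
            | None => None
            end
        end
      else None
  end.

Fixpoint run_timed (ops : seq op) : bool :=
  match ops with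
  | [::] => true
  | o :: rest =>
      match ores o with
      | None => if rest is [::] then true else false
      | Some (_, t) =>
          [&& oinv o < t,
              (if rest is o' :: _ then t < oinv o' else true) & run_timed rest]
      end
  end.

Definition times_of (o : op) : seq nat :=
  oinv o :: (if ores o is Some (_, t) then [:: t] else [::]).

Definition all_ops (P : finType) (run : P -> seq op) : seq op :=
  flatten [seq run p | p <- enum P].

Definition is_stop (r : resp) := if r is RStop then true else false.
Definition is_left (r : resp) := if r is RLeft then true else false.
Definition is_right (r : resp) := if r is RRight then true else false.
Definition is_win (r : resp) := if r is RWin then true else false.

Definition responded (o : op) : bool := if ores o is Some _ then true else false.
Definition responded_with (f : resp -> bool) (o : op) : bool :=
  if ores o is Some (r, _) then f r else false.

Definition is_split_on (i : nat) (o : op) : bool :=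
  if ocall o is CSplit i' then i' == i else false.
Definition is_tas_on (j : nat) (o : op) : bool :=
  if ocall o is CTAS j' _ then j' == j else false.
Definition tas_arg (o : op) : nat := if ocall o is CTAS _ a then a else 0.
Definition call_node (c : call) : nat :=
  match c with CSplit i => i | CTAS j _ => j end.

Definition op0 : op := Op (CSplit 0) 0 None.

Definition splitter_spec (ops : seq op) (i : nat) : Prop :=
  let cs := filter (is_split_on i) ops in
  [/\ count (responded_with is_stop) cs <= 1,
      count (responded_with is_left) cs <= (size cs).-1,
      count (responded_with is_right) cs <= (size cs).-1 &
      forall a b, a < size cs -> b < size cs -> a != b ->
        responded_with (fun r => is_stop r || is_right r) (nth op0 cs a) ->
        forall r t, ores (nth op0 cs b) = Some (r, t) ->
          oinv (nth op0 cs a) < t].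

Definition tas_spec (ops : seq op) (j : nat) : Prop :=
  let cs := filter (is_tas_on j) ops in
  [&& size cs <= 2, uniq (map tas_arg cs) & all (fun o => tas_arg o \in [:: 1; 2]) cs] ->
  count (responded_with is_win) cs <= 1 /\
  (0 < size cs -> all responded cs -> count (responded_with is_win) cs = 1).

Definition valid_execution (P : finType) (ell : nat) (run : P -> seq op) : Prop :=
  [/\ forall p, exec ell (AtSplit 1) (run p) <> None,
      forall p, run_timed (run p),
      uniq (flatten (map times_of (all_ops run))),
      forall i, 1 <= i <= ell -> splitter_spec (all_ops run) i &
      forall j, 1 <= j <= ell -> tas_spec (all_ops run) j].

Definition accesses (P : finType) (run : P -> seq op) (p : P) : bool :=
  0 < size (run p).

Definition final_is (ell : nat) (ops : seq op) (x : outcome) : bool :=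
  match exec ell (AtSplit 1) ops, x with
  | Some (Done Win), Win | Some (Done Lose), Lose
  | Some (Done FallOff), FallOff => true
  | _, _ => false
  end.

Definition wins ell ops := final_is ell ops Win.
Definition loses ell ops := final_is ell ops Lose.
Definition falls_off ell ops := final_is ell ops FallOff.
Definition completes ell ops := [|| wins ell ops, loses ell ops | falls_off ell ops].

Definition visits (ops : seq op) (j : nat) : bool :=
  has (fun o => call_node (ocall o) == j) ops.

(* Main.v *)
Require Import Defs.
From mathcomp Require Import all_boot zify.
Set Implicit Arguments. Unset Strict Implicit. Unset Printing Implicit Defensive.


Definition good (ell : nat) (s : pstate) : bool :=
  match s with
  | AtSplit i => (0 < i) && (i <= ell)
  | AtTAS j a => [&& 0 < j, j <= ell & (a == 1) || (a == 2)]
  | Done _ => true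
  end.

Definition good_op (ell : nat) (o : op) : bool :=
  match ocall o with
  | CSplit i => (0 < i) && (i <= ell)
  | CTAS j a => [&& 0 < j, j <= ell & (a == 1) || (a == 2)]
  end.

Lemma step_good (ell : nat) s r s' : good ell s -> step ell s r = Some s' -> good ell s'.
Proof.
case: s => [i|j a|x]; case: r => //= + [<-] /=; try lia.
- move=> /andP[h1 h2]; case: ifP => //= ?; lia.
- move=> /and3P[h1 h2 h3]; case: ifP => //= ?; lia.
Qed.

Lemma exp_good (ell : nat) s o : good ell s -> expected_call_ok s (ocall o) -> good_op ell o.
Proof.
rewrite /good_op; case: s => [i|j a|x]; case: (ocall o) => [i'|j' a'] //=.
- by move=> h /eqP <-.
- by move=> h /andP[/eqP <- /eqP <-].
Qed.

Lemma exec_good (ell : nat) ops s : good ell s -> exec ell s ops <> None -> all (good_op ell) ops.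
Proof.
elim: ops s => [//|o rest IH] s gs /=.
case E: (expected_call_ok s (ocall o)) => //.
rewrite (exp_good gs E) /=.
case: (ores o) => [[r t]|].
- case S: (step ell s r) => [s'|//] h. exact: IH (step_good gs S) h.
- by case: rest {IH}.
Qed.

Lemma genA (ell : nat) (f : pstate -> bool) (h g : op -> bool) :
 (forall s o, good ell s -> expected_call_ok s (ocall o) -> h o -> f s) ->
 (forall s o r t s', good ell s -> expected_call_ok s (ocall o) ->
     ores o = Some (r,t) -> step ell s r = Some s' -> f s' -> g o) ->
 forall ops s, good ell s -> exec ell s ops <> None -> count h ops <= count g ops + f s.
Proof.
move=> H1 H2; elim=> [|o rest IH] s gs /=; first by [].
case E: (expected_call_ok s (ocall o)) => //.
case R: (ores o) => [[r t]|].
- case S: (step ell s r) => [s'|//] hx.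
  have := IH _ (step_good gs S) hx.
  have := H1 _ o gs E. have := H2 _ o r t s' gs E R S.
  case: (h o); case: (g o); case: (f s); case: (f s') => //=; lia.
- case: rest {IH} => // _ /=. have := H1 _ o gs E.
  case: (h o); case: (g o); case: (f s) => //=; lia.
Qed.

Lemma genB (ell : nat) (f : pstate -> bool) (h g : op -> bool) :
 (forall s o r t s', good ell s -> expected_call_ok s (ocall o) ->
     ores o = Some (r,t) -> step ell s r = Some s' -> g o -> f s') ->
 (forall s o, good ell s -> expected_call_ok s (ocall o) -> f s -> h o) ->
 (forall o, g o -> responded o) ->
 forall ops s sf, good ell s -> exec ell s ops = Some sf ->
   count g ops + f s <= count h ops + f sf.
Proof.
move=> H1 H2 H3; elim=> [|o rest IH] s sf gs /=; first by case=> ->.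
case E: (expected_call_ok s (ocall o)) => //.
case R: (ores o) => [[r t]|].
- case S: (step ell s r) => [s'|//] hx.
  have := IH _ _ (step_good gs S) hx.
  have := H1 _ o r t s' gs E R S. have := H2 _ o gs E.
  case: (h o); case: (g o); case: (f s); case: (f s') => //=; lia.
- case: rest {IH} => // [[<-]] /=. have := H2 _ o gs E. have := H3 o.
  rewrite /responded R.
  case: (h o); case: (g o); case: (f s) => //=; lia.
Qed.

Lemma genC (ell : nat) (f : pstate -> bool) (g : op -> bool) :
 (forall s o r t s', good ell s -> expected_call_ok s (ocall o) ->
     ores o = Some (r,t) -> step ell s r = Some s' -> f s' -> g o) ->
 forall ops s sf, good ell s -> exec ell s ops = Some sf -> f sf -> f s || has g ops.
Proof.
move=> H2; elim=> [|o rest IH] s sf gs /=; first by case=> -> ->.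
case E: (expected_call_ok s (ocall o)) => //.
case R: (ores o) => [[r t]|].
- case S: (step ell s r) => [s'|//] hx hf.
  have := IH _ _ (step_good gs S) hx hf.
  have := H2 _ o r t s' gs E R S.
  case: (g o); case: (f s'); rewrite /= ?orbT // => H; try by have := H isT. by move=> ->; rewrite orbT.
- case: rest {IH} => [|//] /= [] -> ->; by [].
Qed.

Lemma done_responded (ell : nat) ops s x : exec ell s ops = Some (Done x) -> all responded ops.
Proof.
elim: ops s => [|o rest IH] s //=.
case E: (expected_call_ok s (ocall o)) => //.
rewrite /responded; case R: (ores o) => [[r t]|].
- case S: (step ell s r) => [s'|//]. exact: IH.
- case: rest {IH} => // [[Es]]. by rewrite Es in E.
Qed.

Definition bound (s : pstate) := if s is AtTAS j _ then j else 0.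
Definition splitge j (o : op) := if ocall o is CSplit i then j <= i else false.

Lemma visitsD (ell : nat) j ops s : exec ell s ops <> None ->
  has (fun o => j <= call_node (ocall o)) ops -> (j <= bound s) || has (splitge j) ops.
Proof.
elim: ops s => [//|o rest IH] s /=.
case E: (expected_call_ok s (ocall o)) => //.
rewrite /splitge.
case R: (ores o) => [[r t]|].
- case S: (step ell s r) => [s'|//] hx /orP[hj|hr].
  + move: E hj; case: s {S} => [i|j' a|x]; case: (ocall o) => [i'|j'' a'] //=.
    * by move=> _ ->; rewrite !orbT.
    * by move=> /andP[/eqP -> _] ->.
  + have /orP[|->] := IH _ hx hr; last by rewrite !orbT.
    clear R; move: E S; case: s => [i|j' a|x]; case: (ocall o) => [i'|j'' a'] //=;
      case: r => //= + [<-] /=.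
    all: try by move: (has _ rest) => b; rewrite /=; try (case: ifP => /=); intros; destruct b; rewrite ?orbT ?orbF //=; repeat match goal with H : (_ && _) = true |- _ => case/andP: H => ?? end; repeat match goal with H : (_ == _) = true |- _ => move/eqP: H => H end; lia.
- case: rest {IH} => // _ /orP[hj|//].
  move: E hj; case: s => [i|j' a|x]; case: (ocall o) => [i'|j'' a'] //=.
  + by move=> _ ->; rewrite !orbT.
  + by move=> /andP[/eqP -> _] ->.
Qed.


Definition spl i o := is_split_on i o.
Definition stp i o := responded_with is_stop o && is_split_on i o.
Definition rgt i o := responded_with is_right o && is_split_on i o.
Definition tasa j a o := is_tas_on j o && (tas_arg o == a).
Definition win j o := responded_with is_win o && is_tas_on j o.
Definition isSplit k s := if s is AtSplit i then i == k else false.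
Definition isTAS k b s := if s is AtTAS j a then (j == k) && (a == b) else false.
Definition isDone x s := match s, x with
  | Done Win, Win | Done Lose, Lose | Done FallOff, FallOff => true | _, _ => false end.

Definition pF (o : op) := false.
Ltac clean0 :=
  repeat match goal with
  | H : Some _ = Some _ |- _ => injection H; clear H; intros; subst
  | H : Some _ = None |- _ => discriminate H
  | H : None = Some _ |- _ => discriminate H
  | H : is_true false |- _ => discriminate H
  | H : false = true |- _ => discriminate H
  | H : ?x = _ |- _ => is_var x; subst x
  | H : _ = ?x |- _ => is_var x; subst x
  end.
Ltac clean :=
  intros;
  unfold spl, stp, rgt, tasa, win, isSplit, isTAS, isDone, responded, responded_with,
     is_split_on, is_tas_on, tas_arg, good, pF in *; simpl in *;
  clean0; simpl in *;
  repeat (match goal with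
     | H : context [if ?b then _ else _] |- _ =>
     match type of b with bool => destruct b eqn:?; simpl in * end
     | |- context [if ?b then _ else _] =>
     match type of b with bool => destruct b eqn:?; simpl in * end end);
  clean0; simpl in *;
  try done; try lia.
Ltac inst1 := move=> [i0|j0 a0|x0] [[i1|j1 a1] iv rs]; clean.
Ltac inst2 := move=> [i0|j0 a0|x0] [[i1|j1 a1] iv rs] [] t s'; clean.

Ltac inst3 := move=> [c iv [[r t]|]]; clean.

Lemma P1 ell ops s i : good ell s -> exec ell s ops <> None ->
  count (spl i.+1) ops <= count (rgt i) ops + isSplit i.+1 s.
Proof. apply: genA. - inst1. - inst2. Qed.
Lemma P2 ell ops s j : good ell s -> exec ell s ops <> None ->
  count (tasa j 1) ops <= count (stp j) ops + isTAS j 1 s.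
Proof. apply: genA. - inst1. - inst2. Qed.
Lemma P3 ell ops s j : good ell s -> exec ell s ops <> None ->
  count (tasa j 2) ops <= count (win j.+1) ops + isTAS j 2 s.
Proof. apply: genA. - inst1. - inst2. Qed.
Lemma P4 ell ops s sf : good ell s -> exec ell s ops = Some sf ->
  isDone Win sf -> isDone Win s || has (win 1) ops.
Proof. apply: genC. inst2. Qed.
Lemma P5 ell ops s sf : good ell s -> exec ell s ops = Some sf ->
  isDone FallOff sf -> isDone FallOff s || has (rgt ell) ops.
Proof. apply: genC. inst2. Qed.
Lemma B1 ell ops s sf j : good ell s -> exec ell s ops = Some sf ->
  count (win j.+2) ops + isTAS j.+1 2 s <= count (tasa j.+1 2) ops + isTAS j.+1 2 sf.
Proof. apply: genB. - inst2. - inst1. - inst3. Qed.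
Lemma B2 ell ops s sf : good ell s -> exec ell s ops = Some sf ->
  count (win 1) ops + isDone Win s <= count pF ops + isDone Win sf.
Proof. apply: genB. - inst2. - inst1. - inst3. Qed.
Lemma B3 ell ops s sf i : good ell s -> exec ell s ops = Some sf ->
  count (stp i) ops + isTAS i 1 s <= count (tasa i 1) ops + isTAS i 1 sf.
Proof. apply: genB. - inst2. - inst1. - inst3. Qed.
Lemma B4 ell ops s sf i : i < ell -> good ell s -> exec ell s ops = Some sf ->
  count (rgt i) ops + isSplit i.+1 s <= count (spl i.+1) ops + isSplit i.+1 sf.
Proof. move=> hi. apply: genB. - inst2. - inst1. - inst3. Qed.
Lemma B5 ell ops s sf : good ell s -> exec ell s ops = Some sf ->
  count (rgt ell) ops + isDone FallOff s <= count pF ops + isDone FallOff sf.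
Proof. apply: genB. - inst2. - inst1. - inst3. Qed.

Lemma cntA (P : finType) (run : P -> seq op) a :
  count a (all_ops run) = \sum_p count a (run p).
Proof. by rewrite /all_ops count_flatten -map_comp sumnE big_map big_enum. Qed.

Lemma sumle (P : finType) (run : P -> seq op) a b (x : P -> nat) :
  (forall p, count a (run p) <= count b (run p) + x p) ->
  count a (all_ops run) <= count b (all_ops run) + \sum_p x p.
Proof. move=> H; rewrite !cntA -big_split; exact: leq_sum. Qed.

Lemma sumle0 (P : finType) (run : P -> seq op) a b :
  (forall p, count a (run p) <= count b (run p)) ->
  count a (all_ops run) <= count b (all_ops run).
Proof.
move=> H; have := @sumle P run a b (fun _ => 0).
rewrite big1 // addn0; apply=> p; rewrite addn0; exact: H.
Qed.

Lemma le1 (P : finType) (run : P -> seq op) a p :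
  count a (run p) <= count a (all_ops run).
Proof. by rewrite cntA (bigD1 p) //= leq_addr. Qed.

Lemma pos1 (P : finType) (run : P -> seq op) a p :
  has a (run p) -> 0 < count a (all_ops run).
Proof. rewrite has_count => h; exact: leq_trans h (le1 _ _ _). Qed.

Lemma count0 (a : pred op) (s : seq op) : all (fun o => ~~ a o) s -> count a s = 0.
Proof. by elim: s => [//|o s IH] /= /andP[/negbTE -> /IH ->]. Qed.

Lemma size3 (cs : seq op) :
  all (responded_with (fun r => is_stop r || Defs.is_left r || is_right r)) cs ->
  size cs <= count (responded_with is_stop) cs + count (responded_with Defs.is_left) cs
             + count (responded_with is_right) cs.
Proof.
elim: cs => [//|o cs IH] /= /andP[h /IH]; move: h.
rewrite /responded_with; case: (ores o) => [[[] t]|] //= _; lia.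
Qed.

Lemma exec_resp ell s ops i : exec ell s ops <> None ->
  all (fun o => is_split_on i o ==> (responded o ==>
      responded_with (fun r => is_stop r || Defs.is_left r || is_right r) o)) ops.
Proof.
elim: ops s => [//|o rest IH] s /=.
case E: (expected_call_ok s (ocall o)) => //.
rewrite /responded /responded_with.
case R: (ores o) => [[r t]|].
- case S: (step ell s r) => [s'|//] h. rewrite (IH _ h) andbT.
  move: E S; rewrite /is_split_on; case: s => [i0|j0 a0|x0]; case: (ocall o) => [i1|j1 a1] //=;
    clear R; case: r => //=; try by rewrite ?implybT.
- by case: rest {IH} => //= _; rewrite implybT.
Qed.

Lemma mem_map_cnt (cs : seq op) x :
  x \in map tas_arg cs -> 0 < count (fun o => tas_arg o == x) cs.
Proof.
elim: cs => [//|o cs IH] /=; rewrite inE => /orP[/eqP ->|/IH]; first by rewrite eqxx.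
lia.
Qed.

Lemma pre_ok (cs : seq op) :
  all (fun o => tas_arg o \in [:: 1; 2]) cs ->
  count (fun o => tas_arg o == 1) cs <= 1 -> count (fun o => tas_arg o == 2) cs <= 1 ->
  [&& size cs <= 2, uniq (map tas_arg cs) & all (fun o => tas_arg o \in [:: 1; 2]) cs].
Proof.
move=> Ha h1 h2; rewrite Ha andbT; apply/andP; split.
- suff: size cs = count (fun o => tas_arg o == 1) cs + count (fun o => tas_arg o == 2) cs by lia.
  elim: cs Ha {h1 h2} => [//|o cs IH] /= /andP[ho /IH ->].
  move: ho; rewrite !inE; case/orP=> /eqP -> /=; lia.
- elim: cs Ha h1 h2 => [//|o cs IH] /= /andP[ho Ha] h1 h2.
  apply/andP; split; last first.
    apply: IH => //; [exact: leq_trans (leq_addl _ _) h1 | exact: leq_trans (leq_addl _ _) h2].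
  apply/negP => /mem_map_cnt.
  move: ho h1 h2; rewrite !inE; case/orP=> /eqP -> /=; lia.
Qed.

Lemma countF (s : seq op) : count pF s = 0.
Proof. by elim: s. Qed.

Lemma splitge_has ell j (s : seq op) : has (splitge j) s -> all (good_op ell) s ->
  exists i, [/\ 0 < i, j <= i, i <= ell & has (spl i) s].
Proof.
elim: s => [//|o s IH] /= /orP[h|h] /andP[g gs].
- move: h g; rewrite /splitge /good_op /spl /is_split_on.
  case: (ocall o) => // i hi /andP[h1 h2]; exists i; split=> //=; by rewrite eqxx.
- have [i [h1 h2 h3 h4]] := IH h gs; exists i; split=> //=; by rewrite h4 orbT.
Qed.

Theorem lemma7 (P : finType) (ell : nat) (run : P -> seq op) :
  0 < ell ->
  valid_execution ell run ->
  [/\ #|[pred p | wins ell (run p)]| <= 1,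
      (exists p, accesses run p) ->
        (forall p, accesses run p -> completes ell (run p)) ->
        exists p, accesses run p /\ ~~ loses ell (run p) &
      #|[pred p | accesses run p]| <= ell ->
        (forall p j, visits (run p) j -> j <= #|[pred p | accesses run p]|) /\
        (forall p, ~~ falls_off ell (run p))].
Proof.
move=> ell0 [Hex Htm Hun Hsp Hta].
have g1 : good ell (AtSplit 1) by rewrite /= ell0.
have Gp : forall p, all (good_op ell) (run p) := fun p => exec_good g1 (Hex p).
have zero : forall (a : pred op) p, (forall o, good_op ell o -> ~~ a o) -> count a (run p) = 0.
  move=> a p H; apply: count0; apply: sub_all (Gp p) => o; exact: H.
have zrgt0 : forall p, count (rgt 0) (run p) = 0.
  move=> p; apply: zero => -[[i|j a] iv [[[] t]|]];
    rewrite /good_op /rgt /responded_with /is_split_on /=; lia.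
have zwin : forall p, count (win ell.+1) (run p) = 0.
  move=> p; apply: zero => -[[i|j a] iv [[[] t]|]];
    rewrite /good_op /win /responded_with /is_tas_on /=; lia.
have Aall : forall q : pred op, (forall p, all q (run p)) -> all q (all_ops run).
  move=> q H; rewrite /all_ops; elim: (enum P) => [//|p ps IH] /=; rewrite all_cat H; exact: IH.
have Hempty : forall p, ~~ accesses run p -> run p = [::].
  by move=> p; rewrite /accesses; case: (run p).
have cvS : forall i, count (responded_with is_stop) (filter (is_split_on i) (all_ops run))
                   = count (stp i) (all_ops run).
  by move=> i; rewrite count_filter.
have cvR : forall i, count (responded_with is_right) (filter (is_split_on i) (all_ops run))
                   = count (rgt i) (all_ops run).
  by move=> i; rewrite count_filter.
have cvW : forall j, count (responded_with is_win) (filter (is_tas_on j) (all_ops run))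
                   = count (win j) (all_ops run).
  by move=> j; rewrite count_filter.
have cvA : forall j a, count (fun o => tas_arg o == a) (filter (is_tas_on j) (all_ops run))
                   = count (tasa j a) (all_ops run).
  move=> j a; rewrite count_filter; apply: eq_count => o; by rewrite /tasa /= andbC.
have Rle : forall i, 0 < i <= ell -> count (rgt i) (all_ops run) <= (count (spl i) (all_ops run)).-1.
  move=> i hi; case: (Hsp i hi) => _ _ hr _; by rewrite cvR size_filter in hr.
have Sle : forall i, 0 < i <= ell -> count (stp i) (all_ops run) <= 1.
  move=> i hi; case: (Hsp i hi) => hs _ _ _; by rewrite cvS in hs.
have preJ : forall j, 0 < j <= ell -> count (win j.+1) (all_ops run) <= 1 ->
   [&& size (filter (is_tas_on j) (all_ops run)) <= 2,
       uniq (map tas_arg (filter (is_tas_on j) (all_ops run)))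
     & all (fun o => tas_arg o \in [:: 1; 2]) (filter (is_tas_on j) (all_ops run))].
  move=> j hj hw; apply: pre_ok.
  - rewrite all_filter; apply: Aall => p; apply: sub_all (Gp p) => -[[i|j' a] iv rs];
      rewrite /good_op /tas_arg /is_tas_on /= ?inE //; move=> /and3P[_ _ ->]; by rewrite implybT.
  - rewrite cvA; apply: leq_trans (Sle j hj).
    apply: sumle0 => p; have := @P2 ell (run p) (AtSplit 1) j g1 (Hex p); by rewrite /= addn0.
  - rewrite cvA; apply: leq_trans hw.
    apply: sumle0 => p; have := @P3 ell (run p) (AtSplit 1) j g1 (Hex p); by rewrite /= addn0.
have pre : forall j, 0 < j <= ell ->
   [&& size (filter (is_tas_on j) (all_ops run)) <= 2,
       uniq (map tas_arg (filter (is_tas_on j) (all_ops run)))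
     & all (fun o => tas_arg o \in [:: 1; 2]) (filter (is_tas_on j) (all_ops run))].
  suff H : forall n j, 0 < j -> j + n = ell ->
   [&& size (filter (is_tas_on j) (all_ops run)) <= 2,
       uniq (map tas_arg (filter (is_tas_on j) (all_ops run)))
     & all (fun o => tas_arg o \in [:: 1; 2]) (filter (is_tas_on j) (all_ops run))].
    move=> j /andP[h1 h2]; apply: (H (ell - j)) => //; lia.
  elim=> [|n IH] j hj hjn.
  - apply: preJ; first lia.
    rewrite addn0 in hjn; subst j; rewrite cntA big1 // => p _; exact: zwin p.
  - apply: preJ; first lia.
    have hj1 : 0 < j.+1 <= ell by lia.
    case: (Hta j.+1 hj1 (IH j.+1 isT _)); first lia.
    by rewrite cvW.
have Wle : forall j, 0 < j <= ell -> count (win j) (all_ops run) <= 1.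
  move=> j hj; case: (Hta j hj (pre j hj)); by rewrite cvW.
split.
-
  have wp : forall p, wins ell (run p) -> 0 < count (win 1) (run p).
    move=> p; rewrite /wins /final_is.
    case E: (exec ell (AtSplit 1) (run p)) => [[i|j a|[]]|] //= _.
    have := @P4 ell (run p) (AtSplit 1) (Done Win) g1 E isT; by rewrite /= has_count.
  apply: (leq_trans _ (Wle 1 _)); last by rewrite ell0.
  rewrite cntA -sum1_card big_mkcond /=; apply: leq_sum => p _; rewrite inE.
  by case: ifP => // /wp.
-
  move=> [p0 acc0] Hcomp.
  case: (boolP [exists p, accesses run p && ~~ loses ell (run p)]) => [/existsP[p /andP[h1 h2]]|];
    first by exists p.
  rewrite negb_exists => /forallP Hl; exfalso.
  have Hlose : forall p, accesses run p -> exec ell (AtSplit 1) (run p) = Some (Done Lose).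
    move=> p ap; have := Hl p; rewrite ap /= negbK /loses /final_is.
    by case: (exec ell (AtSplit 1) (run p)) => [[| |[]]|].
  have sumB : forall (g h : pred op) (f : pstate -> bool), f (AtSplit 1) = false -> f (Done Lose) = false ->
      (forall p sf, exec ell (AtSplit 1) (run p) = Some sf ->
         count g (run p) + f (AtSplit 1) <= count h (run p) + f sf) ->
      count g (all_ops run) <= count h (all_ops run).
    move=> g h f f1 f2 H; apply: sumle0 => p; case: (boolP (accesses run p)) => ap.
    + by have := H p _ (Hlose p ap); rewrite f1 f2 !addn0.
    + by rewrite (Hempty p ap).
  have AllR : all responded (all_ops run).
    apply: Aall => p; case: (boolP (accesses run p)) => ap.
    + exact: done_responded (Hlose p ap).
    + by rewrite (Hempty p ap).
  have ha : forall j, count (win j.+2) (all_ops run) <= count (tasa j.+1 2) (all_ops run).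
    move=> j; apply: (sumB _ _ (isTAS j.+1 2)) => // p sf E; exact: B1 g1 E.
  have hb : count (win 1) (all_ops run) = 0.
    apply/eqP; rewrite -leqn0; apply: (@leq_trans (count pF (all_ops run))); last by rewrite countF.
    apply: (sumB _ _ (isDone Win)) => // p sf E; exact: B2 g1 E.
  have hc : forall i, count (stp i) (all_ops run) <= count (tasa i 1) (all_ops run).
    move=> i; apply: (sumB _ _ (isTAS i 1)) => // p sf E; exact: B3 g1 E.
  have hd : forall i, 0 < i -> i < ell -> count (rgt i) (all_ops run) <= count (spl i.+1) (all_ops run).
    move=> i hi0 hi; apply: (sumB _ _ (isSplit i.+1));
      [by case: i hi0 hi | by [] | move=> p sf E; exact: B4 hi g1 E].
  have he : count (rgt ell) (all_ops run) = 0.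
    apply/eqP; rewrite -leqn0; apply: (@leq_trans (count pF (all_ops run))); last by rewrite countF.
    apply: (sumB _ _ (isDone FallOff)) => // p sf E; exact: B5 g1 E.
  have hf : forall j, 0 < j <= ell -> 0 < count (is_tas_on j) (all_ops run) ->
      count (win j) (all_ops run) = 1.
    move=> j hj hpos; case: (Hta j hj (pre j hj)) => _; rewrite cvW size_filter; apply=> //.
    rewrite all_filter; apply: sub_all AllR => o /= ->; by rewrite implybT.
  have ER : forall i, all (fun o => is_split_on i o ==> (responded o ==>
      responded_with (fun r => is_stop r || Defs.is_left r || is_right r) o)) (all_ops run).
    move=> i; apply: Aall => p; exact: exec_resp (Hex p).
  have hg : forall i, 0 < i <= ell -> 0 < count (spl i) (all_ops run) ->
      0 < count (stp i) (all_ops run) + count (rgt i) (all_ops run).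
    move=> i hi hpos; case: (Hsp i hi) => _ hl _ _.
    have hall : all (responded_with (fun r => is_stop r || Defs.is_left r || is_right r))
                  (filter (is_split_on i) (all_ops run)).
      rewrite all_filter; have := ER i; have := AllR.
      elim: (all_ops run) => [//|o s IH] /= /andP[r1 r2] /andP[e1 e2].
      rewrite IH // andbT; move: e1; rewrite r1 /=; by case: (is_split_on i o).
    have := size3 hall.
    rewrite cvS cvR size_filter; have hp : 0 < count (is_split_on i) (all_ops run) by exact: hpos.
    move: hl hp; rewrite size_filter; lia.
  have hT : forall j, 0 < j <= ell -> count (is_tas_on j) (all_ops run) = 0.
    elim=> [//|j IH] hj.
    case: (posnP (count (is_tas_on j.+1) (all_ops run))) => // hpos; exfalso.
    have w1 := hf _ hj hpos.
    case: j IH hj hpos w1 => [|j] IH hj hpos w1; first by rewrite hb in w1.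
    have h0 := IH ltac:(lia).
    have h1 : count (tasa j.+1 2) (all_ops run) <= count (is_tas_on j.+1) (all_ops run).
      by apply: sub_count => o /andP[].
    have := ha j; lia.
  have hS : forall n i, 0 < i -> i + n = ell -> count (spl i) (all_ops run) = 0.
    elim=> [|n IH] i hi hin;
      case: (posnP (count (spl i) (all_ops run))) => // hpos; exfalso;
      have := hg i ltac:(lia) hpos;
      have h1 : count (tasa i 1) (all_ops run) <= count (is_tas_on i) (all_ops run);
      try (by apply: sub_count => o /andP[]);
      have h2 := hT i ltac:(lia); have h3 := hc i.
    + rewrite addn0 in hin; subst i; rewrite he; lia.
    + have := hd i hi ltac:(lia); rewrite (IH i.+1) //; last by lia.
      lia.
  have : has (spl 1) (run p0).
    move: acc0 (Hex p0); rewrite /accesses; case: (run p0) => [//|o rest] _ /=.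
    rewrite /spl /is_split_on /=.
    case: (ocall o) => [i|j a] /=; last by move=> H; case: H.
    by case: eqP => [<- _|_ H]; [rewrite eqxx | case: H].
  move=> /pos1; rewrite (hS (ell - 1) 1) //; lia.
-
  move=> hk.
  have M1 : count (spl 1) (all_ops run) <= #|[pred p | accesses run p]|.
    rewrite cntA -sum1_card [X in _ <= X]big_mkcond /=; apply: leq_sum => p _; rewrite inE.
    case: (boolP (accesses run p)) => ap.
    + have := @P1 ell (run p) (AtSplit 1) 0 g1 (Hex p); by rewrite zrgt0.
    + by rewrite (Hempty p ap).
  have Mi : forall i, 0 < i <= ell ->
      count (spl i) (all_ops run) <= #|[pred p | accesses run p]| - i.-1.
    elim=> [//|i IH] hi; case: i IH hi => [|i] IH hi; first by rewrite subn0.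
    have h1 := IH ltac:(lia).
    have h2 := Rle i.+1 ltac:(lia).
    have h3 : count (spl i.+2) (all_ops run) <= count (rgt i.+1) (all_ops run).
      apply: sumle0 => p; have := @P1 ell (run p) (AtSplit 1) i.+1 g1 (Hex p).
      by rewrite /= addn0.
    lia.
  split.
  + move=> p [//|j] hv.
    have := @visitsD ell j.+1 (run p) (AtSplit 1) (Hex p).
    have hv' : has (fun o => j.+1 <= call_node (ocall o)) (run p).
      by apply: sub_has hv => o /eqP ->.
    move=> /(_ hv') /= /splitge_has /(_ (Gp p)) [i [h1 h2 h3 h4]].
    have := pos1 h4; have := Mi i ltac:(lia); lia.
  + move=> p; apply/negP; rewrite /falls_off /final_is.
    case E: (exec ell (AtSplit 1) (run p)) => [[i|j a|[]]|] //= _.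
    have := @P5 ell (run p) (AtSplit 1) (Done FallOff) g1 E isT.
    rewrite /= => /pos1 h.
    have := Rle ell ltac:(lia); have := Mi ell ltac:(lia); lia.
Qed.
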